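(* In the setting of the context, Axiom (P2) holds for the projection distances $\{d_a\mid a\in C\}$ with any $\theta\ge4\delta$: for pairwise distinct $a,b,c\in C$, if $d_a(b,c)>\theta$ then $d_b(a,c)\le\theta$.
   Context: $X$ is a $\delta$-hyperbolic geodesic metric space ($\delta>0$, every geodesic triangle $\delta$-thin). $G$ acts on $X$ by isometries and $\mathcal{C}=(C,\{G_c\})$ is a $\rho$-separated fairly rotating family with $\rho\ge20\delta$ (i.e. $C\subseteq X$ is $G$-invariant, $G_c$ fixes $c$, $G_{gc}=gG_cg^{-1}$, distinct points of $C$ are at distance $\ge\rho$, and for $c\in C$, $g\in G_c\setminus\{1\}$, $x\in C\setminus\{c\}$ some geodesic from $x$ to $gx$ meets the closed $1$-ball about $c$). Fix $2+2\delta\le R\le\frac\rho2-3\delta$; $B_r(p)$ denotes the open ball. For $p\in C$, $S_p=\{x:d(x,p)=R\}$ with metric $d_{S_p}(x,y)=$ infimum of lengths of paths from $x$ to $y$ in $X\setminus B_R(p)$ (possibly $\infty$). For $x\in C\setminus\{p\}$, $\pi_p(x)\subseteq S_p$ is the set of points where geodesics $[p,x]$ meet $S_p$, and $d_p(x,y)=\operatorname{diam}_{S_p}(\pi_p(x)\cup\pi_p(y))$. *)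

(* Defs.v *)
From Stdlib Require Import Reals Lra.
From Coquelicot Require Import Coquelicot.
Open Scope R_scope.

Section Defs.
Variable X : Type.
Variable d : X -> X -> R.

Record IsMetric : Prop := {
  met_nonneg : forall x y, 0 <= d x y;
  met_sep : forall x y, d x y = 0 <-> x = y;
  met_sym : forall x y, d x y = d y x;
  met_tri : forall x y z, d x z <= d x y + d y z }.

Definition geodesic (gam : R -> X) (x y : X) : Prop :=
  gam 0 = x /\ gam (d x y) = y /\
  forall s t, 0 <= s <= d x y -> 0 <= t <= d x y -> d (gam s) (gam t) = Rabs (s - t).

Definition on_geodesic (gam : R -> X) (x y : X) (z : X) : Prop :=
  exists t, 0 <= t <= d x y /\ gam t = z.

Definition geodesic_space : Prop :=
  forall x y, exists gam, geodesic gam x y.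

Definition triangles_thin (delta : R) : Prop :=
  forall x y z g1 g2 g3, geodesic g1 x y -> geodesic g2 y z -> geodesic g3 x z ->
  forall p, on_geodesic g1 x y p ->
  exists q, (on_geodesic g2 y z q \/ on_geodesic g3 x z q) /\ d p q <= delta.

Definition hyperbolic_geodesic_space (delta : R) : Prop :=
  IsMetric /\ geodesic_space /\ triangles_thin delta.

Fixpoint partition_sum (gam : R -> X) (t : nat -> R) (n : nat) : R :=
  match n with
  | O => 0
  | S m => partition_sum gam t m + d (gam (t m)) (gam (t (S m)))
  end.

Definition is_partition (t : nat -> R) (n : nat) : Prop :=
  t O = 0 /\ t n = 1 /\ forall i, (i < n)%nat -> t i <= t (S i).

Definition path_length (gam : R -> X) : Rbar :=
  Rbar_lub (fun l => exists t n, is_partition t n /\ l = Finite (partition_sum gam t n)).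

Definition continuous_on01 (gam : R -> X) : Prop :=
  forall s, 0 <= s <= 1 -> forall eps, 0 < eps -> exists eta, 0 < eta /\
    forall t, 0 <= t <= 1 -> Rabs (t - s) < eta -> d (gam s) (gam t) < eps.

Definition path_outside (p : X) (r : R) (gam : R -> X) (u v : X) : Prop :=
  continuous_on01 gam /\ gam 0 = u /\ gam 1 = v /\
  forall t, 0 <= t <= 1 -> r <= d p (gam t).

Definition sphere (p : X) (r : R) (x : X) : Prop := d x p = r.

(* d_{S_p}(u,v): infimum of lengths of paths in X \ B_r(p) (+oo if none) *)
Definition dS (p : X) (r : R) (u v : X) : Rbar :=
  Rbar_glb (fun l => exists gam, path_outside p r gam u v /\ l = path_length gam).

Definition proj (p : X) (r : R) (x : X) (u : X) : Prop :=
  exists gam, geodesic gam p x /\ on_geodesic gam p x u /\ sphere p r u.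

(* d_p(x,y) = diam_{S_p}(pi_p(x) \cup pi_p(y)) *)
Definition dproj (p : X) (r : R) (x y : X) : Rbar :=
  Rbar_lub (fun l => exists u v,
    (proj p r x u \/ proj p r y u) /\ (proj p r x v \/ proj p r y v) /\
    l = dS p r u v).

End Defs.

Section Group.
Variables (G : Type) (mul : G -> G -> G) (one : G) (inv : G -> G).

Record IsGroup : Prop := {
  grp_assoc : forall a b c, mul a (mul b c) = mul (mul a b) c;
  grp_1l : forall a, mul one a = a;
  grp_1r : forall a, mul a one = a;
  grp_Vl : forall a, mul (inv a) a = one;
  grp_Vr : forall a, mul a (inv a) = one }.

Variables (X : Type) (d : X -> X -> R) (act : G -> X -> X).

Record IsIsometricAction : Prop := {
  act_1 : forall x, act one x = x;
  act_mul : forall g h x, act (mul g h) x = act g (act h x);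
  act_isom : forall g x y, d (act g x) (act g y) = d x y }.

Record FairlyRotatingFamily (C : X -> Prop) (Gc : X -> G -> Prop) (rho : R) : Prop := {
  frf_inv : forall g x, C x -> C (act g x);
  frf_sub1 : forall c, C c -> Gc c one;
  frf_subM : forall c g h, C c -> Gc c g -> Gc c h -> Gc c (mul g h);
  frf_subV : forall c g, C c -> Gc c g -> Gc c (inv g);
  frf_fix : forall c g, C c -> Gc c g -> act g c = c;
  frf_conj : forall c g h, C c ->
      (Gc (act g c) h <-> exists k, Gc c k /\ h = mul g (mul k (inv g)));
  frf_sep : forall c c', C c -> C c' -> c <> c' -> rho <= d c c';
  frf_rot : forall c g x, C c -> Gc c g -> g <> one -> C x -> x <> c ->
      exists gam, geodesic X d gam x (act g x) /\
        exists z, on_geodesic X d gam x (act g x) z /\ d z c <= 1 }.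
End Group.

(* Main.v *)
Require Import Defs.
From Stdlib Require Import Reals Lra Lia Classical.
From Coquelicot Require Import Coquelicot.
Open Scope R_scope.

Lemma lub_le (E : Rbar -> Prop) (l : Rbar) :
  (forall x, E x -> Rbar_le x l) -> Rbar_le (Rbar_lub E) l.
Proof. unfold Rbar_lub. destruct (Rbar_ex_lub E) as [m [H1 H2]]; simpl. intros H; apply H2; exact H. Qed.

Lemma glb_le (E : Rbar -> Prop) x : E x -> Rbar_le (Rbar_glb E) x.
Proof. unfold Rbar_glb. destruct (Rbar_ex_glb E) as [m [H1 H2]]; simpl. intros H; apply H1; exact H. Qed.

Lemma rbar_lt_le_false t z : Rbar_lt (Finite t) z -> Rbar_le z (Finite t) -> False.
Proof. destruct z; simpl; intros; lra. Qed.

Definition lip (X : Type) (d : X -> X -> R) (f : R -> X) (a b : R) : Prop :=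
  forall s t, a <= s <= b -> a <= t <= b -> d (f s) (f t) <= Rabs (s - t).

Lemma lip_glue X d (M : IsMetric X d) f a m b : a <= m <= b ->
  lip X d f a m -> lip X d f m b -> lip X d f a b.
Proof.
  intros Hm H1 H2 s t Hs Ht.
  destruct (Rle_dec s m); destruct (Rle_dec t m).
  - apply H1; lra.
  - pose proof (met_tri X d M (f s) (f m) (f t)).
    pose proof (H1 s m ltac:(lra) ltac:(lra)). pose proof (H2 m t ltac:(lra) ltac:(lra)).
    revert H H0 H3. unfold Rabs; repeat destruct Rcase_abs; intros; lra.
  - pose proof (met_tri X d M (f s) (f m) (f t)).
    pose proof (H2 s m ltac:(lra) ltac:(lra)). pose proof (H1 m t ltac:(lra) ltac:(lra)).
    revert H H0 H3. unfold Rabs; repeat destruct Rcase_abs; intros; lra.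
  - apply H2; lra.
Qed.

Lemma lip_ext X d f g a b : (forall s, a <= s <= b -> f s = g s) -> lip X d g a b -> lip X d f a b.
Proof. intros E H s t Hs Ht. rewrite (E s Hs), (E t Ht). apply H; auto. Qed.

Lemma part_mono t n : is_partition t n -> forall j i, (i <= j <= n)%nat -> t i <= t j.
Proof.
  intros [H0 [H1 H2]]. induction j; intros i Hij.
  - assert (i = 0)%nat by lia. subst; lra.
  - destruct (Nat.eq_dec i (S j)). subst; lra.
    pose proof (IHj i ltac:(lia)). pose proof (H2 j ltac:(lia)). lra.
Qed.

Lemma dS_le_lip X d (M : IsMetric X d) (p u v : X) r (f : R -> X) (L : R) :
  0 < L -> f 0 = u -> f L = v -> lip X d f 0 L ->
  (forall s, 0 <= s <= L -> r <= d p (f s)) ->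
  Rbar_le (dS X d p r u v) (Finite L).
Proof.
  intros HL Hu Hv Hlip Hout.
  set (gam := fun t => f (L * t)).
  assert (Hg : forall s t, 0 <= s <= 1 -> 0 <= t <= 1 -> d (gam s) (gam t) <= L * Rabs (s - t)).
  { intros s t Hs Ht. unfold gam.
    assert (0 <= L * s <= L) by nra. assert (0 <= L * t <= L) by nra.
    eapply Rle_trans. apply Hlip; auto.
    rewrite <- Rmult_minus_distr_l, Rabs_mult, (Rabs_pos_eq L) by lra. lra. }
  apply Rbar_le_trans with (path_length X d gam).
  - apply glb_le. exists gam. split; auto.
    split; [|split; [|split]].
    + intros s Hs eps Heps. exists (eps / L). split. apply Rdiv_lt_0_compat; lra.
      intros t Ht Hst. eapply Rle_lt_trans. apply Hg; auto.
      apply Rmult_lt_reg_l with (/ L). apply Rinv_0_lt_compat; lra.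
      rewrite <- Rmult_assoc, Rinv_l by lra. rewrite Rabs_minus_sym.
      unfold Rdiv in Hst. lra.
    + unfold gam. rewrite Rmult_0_r. auto.
    + unfold gam. rewrite Rmult_1_r. auto.
    + intros t Ht. unfold gam. apply Hout. nra.
  - apply lub_le. intros x [t [n [Hp ->]]]. simpl.
    assert (Hm := part_mono t n Hp).
    destruct Hp as [H0 [H1 H2]].
    assert (forall k, (k <= n)%nat -> partition_sum X d gam t k <= L * t k).
    { induction k; intros Hk; simpl.
      - rewrite H0. lra.
      - pose proof (IHk ltac:(lia)).
        assert (0 <= t k) by (rewrite <- H0; apply Hm; lia).
        assert (t (S k) <= 1) by (rewrite <- H1; apply Hm; lia).
        pose proof (H2 k ltac:(lia)).
        pose proof (Hg (t k) (t (S k)) ltac:(lra) ltac:(lra)).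
        rewrite Rabs_left1 in H6 by lra. nra. }
    pose proof (H n (le_n n)). rewrite H1 in H3. lra.
Qed.

Lemma geo_d0 X d (M : IsMetric X d) g x y s : geodesic X d g x y -> 0 <= s <= d x y -> d x (g s) = s.
Proof. intros [H0 [H1 H2]] Hs. rewrite <- H0 at 1. rewrite H2 by lra. rewrite Rabs_left1 by lra. lra. Qed.

Lemma geo_d1 X d (M : IsMetric X d) g x y s : geodesic X d g x y -> 0 <= s <= d x y -> d (g s) y = d x y - s.
Proof. intros [H0 [H1 H2]] Hs. rewrite <- H1 at 1. rewrite H2 by lra. rewrite Rabs_left1 by lra. lra. Qed.

Lemma proj_param X d (M : IsMetric X d) p r e u : proj X d p r e u ->
  exists g, geodesic X d g p e /\ 0 <= r <= d p e /\ g r = u.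
Proof.
  intros [g [Hg [[t [Ht Hu]] Hs]]]. unfold sphere in Hs.
  assert (d p u = t) by (rewrite <- Hu; apply (geo_d0 X d M g p e); auto).
  rewrite (met_sym X d M) in Hs. assert (t = r) by lra. subst t r.
  exists g. split; [exact Hg| split; [lra | exact Hu]].
Qed.

Lemma lemA X d delta r (M : IsMetric X d) (Hgs : geodesic_space X d)
  (Hthin : triangles_thin X d delta) (Hd : 0 < delta) p e1 e2 u v :
  proj X d p r e1 u -> proj X d p r e2 v -> r + delta <= d p e1 ->
  Rbar_le (dS X d p r u v) (Finite (4 * delta)) \/
  exists q, d e1 q + d q e2 = d e1 e2 /\ d p q <= r + 2 * delta.
Proof.
  intros Hu Hv Hpe.
  destruct (proj_param X d M p r e1 u Hu) as [g1 [G1 [Hr1 Hu1]]].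
  destruct (proj_param X d M p r e2 v Hv) as [g2 [G2 [Hr2 Hv2]]].
  destruct (Hgs e1 e2) as [sg Sg].
  set (x := g1 (r + delta)).
  assert (Hpx : d p x = r + delta) by (apply (geo_d0 X d M g1 p e1); auto; lra).
  destruct (Hthin p e1 e2 g1 sg g2 G1 Sg G2 x) as [q [[Hq | Hq] Hxq]].
  { exists (r + delta). split; auto; lra. }
  - right. exists q. destruct Hq as [t' [Ht' Hq]]. subst q. split.
    + rewrite (geo_d0 X d M sg e1 e2), (geo_d1 X d M sg e1 e2) by auto. lra.
    + pose proof (met_tri X d M p x (sg t')). lra.
  - left. destruct Hq as [s [Hs Hq]].
    assert (Hpq : d p q = s) by (rewrite <- Hq; apply (geo_d0 X d M g2 p e2); auto).
    pose proof (met_tri X d M p x q). pose proof (met_tri X d M p q x).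
    pose proof (met_sym X d M q x). pose proof (met_nonneg X d M x q).
    destruct (Hgs x q) as [g G]. set (m := d x q).
    assert (Gd0 : forall t, 0 <= t <= m -> d x (g t) = t) by (intros; apply (geo_d0 X d M g x q); auto).
    destruct G as [G0 [G1' G2']].
    set (L := delta + m + (s - r)).
    set (f := fun tau => if Rle_dec tau delta then g1 (r + tau)
                         else if Rle_dec tau (delta + m) then g (tau - delta)
                         else g2 (s + delta + m - tau)).
    assert (E1 : forall tau, 0 <= tau <= delta -> f tau = g1 (r + tau)).
    { intros tau Ht. unfold f. destruct (Rle_dec tau delta); auto; lra. }
    assert (E2 : forall tau, delta <= tau <= delta + m -> f tau = g (tau - delta)).
    { intros tau Ht. unfold f. destruct (Rle_dec tau delta).
      - assert (tau = delta) by lra. subst tau. rewrite Rminus_diag, G0. reflexivity.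
      - destruct (Rle_dec tau (delta + m)); auto; lra. }
    assert (E3 : forall tau, delta + m <= tau <= L -> f tau = g2 (s + delta + m - tau)).
    { intros tau Ht. unfold f. destruct (Rle_dec tau delta).
      - assert (m = 0) by (unfold m in *; lra).
        assert (tau = delta) by lra. subst tau.
        assert (x = q) by (apply (met_sep X d M); unfold m in *; lra).
        replace (s + delta + m - delta) with s by lra. rewrite Hq. auto.
      - destruct (Rle_dec tau (delta + m)).
        + assert (tau = delta + m) by lra. subst tau.
          replace (s + delta + m - (delta + m)) with s by lra. rewrite Hq.
          replace (delta + m - delta) with m by lra. auto.
        + auto. }
    assert (HL : L <= 4 * delta) by (unfold L, m in *; lra).
    apply Rbar_le_trans with (Finite L); [| simpl; exact HL].
    apply (dS_le_lip X d M p u v r f L).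
    + unfold L, m in *; lra.
    + rewrite E1 by lra. rewrite Rplus_0_r; auto.
    + rewrite E3 by (unfold L, m in *; lra). replace (s + delta + m - L) with r by (unfold L; lra). auto.
    + apply (lip_glue X d M f 0 (delta + m) L). unfold L, m in *; lra.
      apply (lip_glue X d M f 0 delta (delta + m)). unfold m in *; lra.
      * apply lip_ext with (fun tau => g1 (r + tau)). auto.
        intros a b Ha Hb. destruct G1 as [_ [_ G]]. rewrite G by lra.
        right. f_equal. ring.
      * apply lip_ext with (fun tau => g (tau - delta)). auto.
        intros a b Ha Hb. rewrite G2' by (unfold m in *; lra). right. f_equal. ring.
      * apply lip_ext with (fun tau => g2 (s + delta + m - tau)). auto.
        intros a b Ha Hb. destruct G2 as [_ [_ G]]. rewrite G by (unfold L in *; lra).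
        rewrite Rabs_minus_sym. right. f_equal. ring.
    + intros tau Ht.
      destruct (Rle_dec tau delta).
      * rewrite E1 by lra. rewrite (geo_d0 X d M g1 p e1) by first [exact G1 | lra]. lra.
      * destruct (Rle_dec tau (delta + m)).
        -- rewrite E2 by lra. pose proof (met_tri X d M p (g (tau - delta)) x).
           pose proof (Gd0 (tau - delta) ltac:(lra)).
           rewrite (met_sym X d M (g (tau - delta)) x) in H3. unfold m in *; lra.
        -- rewrite E3 by lra. rewrite (geo_d0 X d M g2 p e2) by first [exact G2 | unfold L in *; lra].
           unfold L in *; lra.
Qed.

Lemma between_same X d (M : IsMetric X d) e q : d e q + d q e = d e e -> e = q.
Proof.
  intros H. apply (met_sep X d M). pose proof (met_nonneg X d M e q).
  pose proof (met_nonneg X d M q e). assert (d e e = 0) by (apply (met_sep X d M); auto). lra.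
Qed.

Theorem lemma3p5
  (X : Type) (d : X -> X -> R) (delta : R)
  (G : Type) (mul : G -> G -> G) (one : G) (inv : G -> G) (act : G -> X -> X)
  (C : X -> Prop) (Gc : X -> G -> Prop) (rho r theta : R)
  (Hdelta : 0 < delta)
  (Hhyp : hyperbolic_geodesic_space X d delta)
  (Hgrp : IsGroup G mul one inv)
  (Hact : IsIsometricAction G mul one X d act)
  (Hfrf : FairlyRotatingFamily G mul one inv X d act C Gc rho)
  (Hrho : 20 * delta <= rho)
  (Hr1 : 2 + 2 * delta <= r) (Hr2 : r <= rho / 2 - 3 * delta)
  (Htheta : 4 * delta <= theta) :
  forall a b c, C a -> C b -> C c -> a <> b -> b <> c -> a <> c ->
    Rbar_lt (Finite theta) (dproj X d a r b c) ->
    Rbar_le (dproj X d b r a c) (Finite theta).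
Proof.
  intros a b c Ca Cb Cc Hab Hbc Hac Hlt.
  destruct Hhyp as [M [Hgs Hthin]].
  assert (Sep : forall x y, C x -> C y -> x <> y -> rho <= d x y)
    by (intros; eapply (frf_sep G mul one inv X d act C Gc rho Hfrf); eauto).
  pose proof (Sep a b Ca Cb Hab) as Dab. pose proof (Sep b c Cb Cc Hbc) as Dbc.
  pose proof (Sep a c Ca Cc Hac) as Dac.
  pose proof (met_sym X d M a b). pose proof (met_sym X d M b c). pose proof (met_sym X d M a c).
  assert (H4 : Rbar_le (Finite (4 * delta)) (Finite theta)) by (simpl; lra).
  assert (Claim : forall z, d a z + d z c = d a c -> d b z <= r + 2 * delta -> False).
  { intros z Hz1 Hz2. apply (rbar_lt_le_false theta _ Hlt).
    apply lub_le. intros l [u [v [Hu [Hv ->]]]].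
    assert (K : forall e1 e2, (e1 = b \/ e1 = c) -> (e2 = b \/ e2 = c) ->
                proj X d a r e1 u -> proj X d a r e2 v -> Rbar_le (dS X d a r u v) (Finite theta)).
    { intros e1 e2 He1 He2 Pu Pv.
      assert (r + delta <= d a e1) by (destruct He1; subst; lra).
      destruct (lemA X d delta r M Hgs Hthin Hdelta a e1 e2 u v Pu Pv H2) as [Hl | [w [Hw1 Hw2]]].
      - eapply Rbar_le_trans; eauto.
      - exfalso.
        destruct He1 as [-> | ->]; destruct He2 as [-> | ->].
        + apply between_same in Hw1; auto. subst w. lra.
        + pose proof (met_tri X d M b z c). pose proof (met_tri X d M a w c).
          pose proof (met_tri X d M a w b). pose proof (met_tri X d M a z b).
          pose proof (met_sym X d M w b). pose proof (met_sym X d M z b).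
          lra.
        + pose proof (met_tri X d M b z c). pose proof (met_tri X d M a w c).
          pose proof (met_tri X d M a w b). pose proof (met_tri X d M a z b).
          pose proof (met_sym X d M w b). pose proof (met_sym X d M z b).
          pose proof (met_sym X d M c w). pose proof (met_sym X d M w c).
          lra.
        + apply between_same in Hw1; auto. subst w. lra. }
    destruct Hu as [Hu | Hu]; destruct Hv as [Hv | Hv].
    + exact (K b b (or_introl eq_refl) (or_introl eq_refl) Hu Hv).
    + exact (K b c (or_introl eq_refl) (or_intror eq_refl) Hu Hv).
    + exact (K c b (or_intror eq_refl) (or_introl eq_refl) Hu Hv).
    + exact (K c c (or_intror eq_refl) (or_intror eq_refl) Hu Hv). }
  apply lub_le. intros l [u [v [Hu [Hv ->]]]].
  assert (K : forall e1 e2, (e1 = a \/ e1 = c) -> (e2 = a \/ e2 = c) ->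
              proj X d b r e1 u -> proj X d b r e2 v -> Rbar_le (dS X d b r u v) (Finite theta)).
  { intros e1 e2 He1 He2 Pu Pv.
    assert (r + delta <= d b e1) by (destruct He1; subst; lra).
    destruct (lemA X d delta r M Hgs Hthin Hdelta b e1 e2 u v Pu Pv H2) as [Hl | [w [Hw1 Hw2]]].
    - eapply Rbar_le_trans; eauto.
    - exfalso.
      destruct He1 as [-> | ->]; destruct He2 as [-> | ->].
      + apply between_same in Hw1; auto. subst w. lra.
      + apply (Claim w); auto.
      + apply (Claim w); auto. rewrite (met_sym X d M c w), (met_sym X d M w a) in Hw1. lra.
      + apply between_same in Hw1; auto. subst w. lra. }
  destruct Hu as [Hu | Hu]; destruct Hv as [Hv | Hv].
  + exact (K a a (or_introl eq_refl) (or_introl eq_refl) Hu Hv).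
  + exact (K a c (or_introl eq_refl) (or_intror eq_refl) Hu Hv).
  + exact (K c a (or_intror eq_refl) (or_introl eq_refl) Hu Hv).
  + exact (K c c (or_intror eq_refl) (or_intror eq_refl) Hu Hv).
Qed.
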